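(* Every closed interval $[a,b]$ in $\overline{\mathbb{R}}$ (with $a<b$ in $\overline{\mathbb{R}}$) is the set of right hand sequential secant derivatives at $0$ of some continuous function $f:[0,1]\to\mathbb{R}$.
   Context: $\overline{\mathbb{R}}=\mathbb{R}\cup\{\pm\infty\}$, and $[a,b]=\{t\in\overline{\mathbb{R}}:a\le t\le b\}$. $L\in\overline{\mathbb{R}}$ is a right hand sequential secant derivative of $f$ at $0$ if there is a sequence $h_n>0$ with $h_n\to0$ and $\frac{f(h_n)-f(0)}{h_n}\to L$ as $n\to\infty$. *)

(* Defs.v *)
From HB Require Import structures.
From mathcomp Require Import all_boot all_order all_algebra.
From mathcomp Require Import all_classical all_reals all_analysis.
Set Implicit Arguments. Unset Strict Implicit. Unset Printing Implicit Defensive.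
Import Order.TTheory GRing.Theory Num.Theory.
Import numFieldNormedType.Exports.
Local Open Scope classical_set_scope.
Local Open Scope ring_scope.

Definition rh_seq_secant_derivative (R : realType) (f : R -> R) (L : \bar R) : Prop :=
  exists h : R^nat,
    (forall n, 0 < h n <= 1) /\
    h @ \oo --> (0 : R) /\
    (fun n => ((f (h n) - f 0) / h n)%:E) @ \oo --> L.

Definition ereal_cc (R : realType) (a b : \bar R) : set (\bar R) :=
  [set t | (a <= t)%E /\ (t <= b)%E].

(* Main.v *)
Require Import Defs.
From HB Require Import structures.
From mathcomp Require Import all_boot all_order all_algebra.
From mathcomp Require Import all_classical all_reals all_analysis.
From mathcomp Require Import lra.
Import Order.TTheory GRing.Theory Num.Theory.
Import numFieldNormedType.Exports.
Local Open Scope classical_set_scope.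
Local Open Scope ring_scope.

Section S.
Variable R : realType.
Implicit Types t x : R.

Definition phi (al be ga de : R) (t : R) : R :=
  al + be * sin t^-1 + (ga + de * sin t^-1) / Num.sqrt t.

Lemma sininv_cont t : 0 < t -> {for t, continuous (fun s : R => sin s^-1)}.
Proof.
move=> t0; have := @continuous_comp R R R (@GRing.inv R) sin t.
apply; first by apply: inv_continuous; rewrite gt_eqF.
exact: continuous_sin.
Qed.

Lemma phi_cont al be ga de t : 0 < t -> {for t, continuous (phi al be ga de)}.
Proof.
move=> t0; rewrite /phi.
apply: continuousD.
  apply: continuousD; first exact: cvg_cst.
  apply: continuousM; first exact: cvg_cst.
  exact: sininv_cont.
apply: continuousM.
  apply: continuousD; first exact: cvg_cst.
  apply: continuousM; first exact: cvg_cst.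
  exact: sininv_cont.
apply: continuousV; first by rewrite gt_eqF // sqrtr_gt0.
exact: sqrt_continuous.
Qed.


Definition Ff al be ga de (x : R) : R := x * phi al be ga de `|x|.

Lemma norm_sin_le1 (y : R) : `|sin y| <= 1.
Proof. by rewrite ler_norml sin_geN1 sin_le1. Qed.

Lemma phi_bound al be ga de t : 0 < t ->
  `|phi al be ga de t| <= (`|al| + `|be|) + (`|ga| + `|de|) / Num.sqrt t.
Proof.
move=> t0; rewrite /phi; set s := sin t^-1.
have s1 : `|s| <= 1 by apply: norm_sin_le1.
have q0 : 0 < Num.sqrt t by rewrite sqrtr_gt0.
apply: (le_trans (ler_normD _ _)); apply: lerD.
  apply: (le_trans (ler_normD _ _)); apply: lerD => //.
  by rewrite normrM ler_piMr.
rewrite normrM normfV (gtr0_norm q0) ler_pM2r ?invr_gt0 //.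
apply: (le_trans (ler_normD _ _)); apply: lerD => //.
by rewrite normrM ler_piMr.
Qed.

Lemma Ff_bound al be ga de x :
  `|Ff al be ga de x| <= (`|al| + `|be|) * `|x| + (`|ga| + `|de|) * Num.sqrt `|x|.
Proof.
have [->|x0] := eqVneq x 0.
  by rewrite /Ff mul0r !normr0 sqrtr0 !mulr0 addr0.
have t0 : 0 < `|x| by rewrite normr_gt0.
rewrite /Ff normrM.
apply: (le_trans (ler_wpM2l (ltW t0) (phi_bound al be ga de _ t0))).
have q0 : 0 < Num.sqrt `|x| by rewrite sqrtr_gt0.
have e : `|x| = Num.sqrt `|x| * Num.sqrt `|x| by rewrite -expr2 sqr_sqrtr // ltW.
rewrite mulrDr [X in _ + X]mulrCA [in X in _ + _ * (X * _)]e mulfK ?gt_eqF //.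
by rewrite [X in X + _ <= _]mulrC.
Qed.

Lemma Ff_cont al be ga de : continuous (Ff al be ga de).
Proof.
move=> x; have [->|x0] := eqVneq x 0; last first.
  apply: (@continuousM R R id (fun y => phi al be ga de `|y|) x); first exact: cvg_id.
  apply: (@continuous_comp R R R Num.norm (phi al be ga de) x).
    exact: norm_continuous.
  by apply: phi_cont; rewrite normr_gt0.
set g := fun y : R => (`|al| + `|be|) * `|y| + (`|ga| + `|de|) * Num.sqrt `|y|.
have nc : {for (0:R), continuous (fun y : R => `|y|)}.
  exact: norm_continuous.
have gc : {for (0:R), continuous g}.
  rewrite /g; apply: cvgD; apply: cvgM; try exact: cvg_cst.
    exact: nc.
  apply: (@continuous_comp R R R Num.norm Num.sqrt 0); first exact: nc.
  exact: sqrt_continuous.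
have g0 : g @ (0:R) --> 0.
  have g00 : g 0 = 0 by rewrite /g normr0 sqrtr0 !mulr0 addr0.
  by apply: cvg_trans gc _; rewrite g00; exact: cvg_id.
rewrite /continuous_at.
have -> : Ff al be ga de 0 = 0 by rewrite /Ff mul0r.
apply: (@squeeze_cvgr _ _ _ _ (fun y => - g y) g).
- near=> y; rewrite -ler_norml; exact: Ff_bound.
- by have := cvgN g0; rewrite oppr0; apply.
- exact: g0.
Unshelve. all: end_near. Qed.


Lemma ivt_step (p : R -> R) (u v l : R) : 0 < u -> 0 < v ->
  (forall t, 0 < t -> {for t, continuous p}) ->
  p u < l < p v -> exists z, 0 < z <= Num.max u v /\ p z = l.
Proof.
move=> u0 v0 pc /andP[ul lv].
have key : forall c d, 0 < c -> c <= d ->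
    Num.min (p c) (p d) <= l <= Num.max (p c) (p d) ->
    exists z, c <= z <= d /\ p z = l.
  move=> c d c0 cd H.
  have cont : {within `[c, d], continuous p}.
    apply: continuous_in_subspaceT => t; rewrite in_setE /= in_itv /= => /andP[ct _].
    by apply: pc; apply: lt_le_trans ct.
  have [z zin pz] := IVT cd cont H.
  by exists z; move: zin; rewrite in_itv /= => ->.
have H1 : Num.min (p u) (p v) <= l <= Num.max (p u) (p v).
  rewrite ge_min le_max (ltW ul) /=; by rewrite (ltW lv) orbT.
have H2 : Num.min (p v) (p u) <= l <= Num.max (p v) (p u).
  by rewrite minC maxC.
have [uv|vu] := leP u v.
  have [z [/andP[uz zv] pz]] := key u v u0 uv H1.
  exists z; split => //; apply/andP; split; first exact: lt_le_trans u0 uz.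
  by [].
have [z [/andP[vz zu] pz]] := key v u v0 (ltW vu) H2.
exists z; split => //; apply/andP; split; first exact: lt_le_trans v0 vz.
by [].
Qed.

Local Open Scope ereal_scope.
Lemma sub_lem (p : R -> R) (a b : \bar R) (h : R^nat) (L : \bar R) :
  (forall t : R, (0 < t)%R -> a <= (p t)%:E /\ (p t)%:E <= b) ->
  (forall n, (0 < h n)%R) ->
  (fun n => (p (h n))%:E) @ \oo --> L -> a <= L /\ L <= b.
Proof.
move=> hab hp hL; split.
  apply: (cvge_ge _ hL); apply: nearW => n. by case: (hab _ (hp n)).
apply: (cvge_le _ hL); apply: nearW => n. by case: (hab _ (hp n)).
Qed.

Lemma ev_lt (u : nat -> \bar R) a y : u @ \oo --> a -> a < y ->
  \forall n \near \oo, u n < y.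
Proof. by move=> hu ay; exact: (hu _ (open_ereal_lt' ay)). Qed.

Lemma ev_gt (u : nat -> \bar R) a y : u @ \oo --> a -> y < a ->
  \forall n \near \oo, y < u n.
Proof. by move=> hu ay; exact: (hu _ (open_ereal_gt' ay)). Qed.

Lemma sup_lem (p : R -> R) (a b L : \bar R) (x y : R^nat) :
  (forall t : R, ((0:R) < t)%R -> {for t, continuous p}) ->
  (forall n, (0 < x n <= 1)%R) -> (forall n, (0 < y n <= 1)%R) ->
  x @ \oo --> (0%R : R) -> y @ \oo --> (0%R : R) ->
  (fun n => (p (x n))%:E) @ \oo --> a -> (fun n => (p (y n))%:E) @ \oo --> b ->
  a <= L <= b ->
  exists h : R^nat, (forall n, (0 < h n <= 1)%R) /\ h @ \oo --> (0%R : R) /\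
    (fun n => (p (h n))%:E) @ \oo --> L.
Proof.
move=> pc hx hy x0 y0 xa yb /andP[aL Lb].
have [eLa|La] := eqVneq L a; first by exists x; rewrite eLa.
have [eLb|Lb'] := eqVneq L b; first by exists y; rewrite eLb.
have aL' : a < L by rewrite lt_neqAle eq_sym La.
have Lb2 : L < b by rewrite lt_neqAle Lb' .
case: L aL Lb La Lb' aL' Lb2 => [l| |] aL Lb La Lb' aL' Lb2; last first.
- by move: aL'; rewrite ltNge leNye.
- by move: Lb2; rewrite ltNge leey.
have ex : forall n, exists z : R, (0 < z <= Num.max (x n) (y n))%R /\
    ((p (x n) < l)%R -> (l < p (y n))%R -> p z = l).
  move=> n; have /andP[xn0 xn1] := hx n; have /andP[yn0 yn1] := hy n.
  have [[pxl lpy]|H] := pselect ((p (x n) < l)%R /\ (l < p (y n))%R).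
    have [z [zb pz]] := @ivt_step p (x n) (y n) l xn0 yn0 pc (introT andP (conj pxl lpy)).
    by exists z; split.
  exists (x n); split.
    by rewrite xn0 /= le_max lexx.
  by move=> h1 h2; exfalso; apply: H.
have [z hz] := choice ex.
exists z; split; [|split].
- move=> n; have [/andP[z0 zm] _] := hz n; rewrite z0 /=.
  apply: le_trans zm _; rewrite ge_max.
  by have /andP[_ ->] := hx n; have /andP[_ ->] := hy n.
- apply: (@squeeze_cvgr _ _ _ _ (fun _ => 0%R) (fun n => x n + y n)%R).
  + apply: nearW => n; have [/andP[z0 zm] _] := hz n.
    rewrite (ltW z0) /=; apply: le_trans zm _; rewrite ge_max.
    have /andP[xn0 _] := hx n; have /andP[yn0 _] := hy n.
    by rewrite lerDl lerDr !ltW.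
  + exact: cvg_cst.
  + by have := cvgD x0 y0; rewrite addr0; apply.
- apply: cvg_near_cst.
  have e1 := ev_lt _ _ _ xa aL'.
  have e2 := ev_gt _ _ _ yb Lb2.
  near=> n.
  have [_ ->] := hz n => //.
  + by rewrite -lte_fin; near: n.
  + by rewrite -lte_fin; near: n.
Unshelve. all: end_near. Qed.
Local Close Scope ereal_scope.

Definition cp (n : nat) : R := pi / 2 + (pi *+ 2) *+ n.
Definition cm (n : nat) : R := cp n + pi.

Lemma cp_ge n : n.+1%:R <= cp n.
Proof.
rewrite /cp -addn1 natrD addrC; apply: lerD.
  by rewrite ler_pdivlMr // mul1r pi_ge2.
apply: (@ler_wMn2r R n 1).
have := pi_ge2 R; rewrite mulr2n; lra.
Qed.

Lemma cm_ge n : n.+1%:R <= cm n.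
Proof. by rewrite /cm; apply: le_trans (cp_ge n) _; rewrite lerDl ltW // pi_gt0. Qed.

Lemma sin_cp n : sin (cp n) = 1.
Proof. by rewrite /cp (periodicn (@sinD2pi R)) sin_pihalf. Qed.

Lemma sin_cm n : sin (cm n) = -1.
Proof. by rewrite /cm sinDpi sin_cp. Qed.

Lemma seq_props (c : nat -> R) : (forall n, n.+1%:R <= c n) ->
  (forall n, 0 < (c n)^-1 <= 1) /\ (fun n => (c n)^-1) @ \oo --> (0:R).
Proof.
move=> hc.
have c0 : forall n, 0 < c n by move=> n; apply: lt_le_trans (hc n); rewrite ltr0n.
have hb : forall n, (c n)^-1 <= n.+1%:R^-1.
  by move=> n; rewrite lef_pV2 ?posrE ?ltr0n.
split.
  move=> n; rewrite invr_gt0 c0 /=; apply: le_trans (hb n) _.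
  by rewrite invf_le1 ?ltr0n // ler1n.
apply: (@squeeze_cvgr _ _ _ _ (fun _ => 0) (@harmonic R)).
- by apply: nearW => n; rewrite (ltW (proj1 (andP (_ : 0 < (c n)^-1 <= 1)))) //= ?hb // invr_gt0 c0 /= invf_le1 ?c0 // (le_trans _ (hc n)) // ler1n.
- exact: cvg_cst.
- exact: cvg_harmonic.
Qed.

Lemma sqrt_big (c : nat -> R) : (forall n, n.+1%:R <= c n) ->
  forall B, \forall n \near \oo, B <= Num.sqrt (c n).
Proof.
move=> hc B; near=> n.
apply: le_trans (ler_norm B) _.
rewrite -sqrtr_sqr ler_sqrt; last by apply: le_trans (hc n); rewrite ler0n.
apply: le_trans (hc n); apply: ltW; apply: lt_trans (_ : n%:R < _).
  by near: n; exact: nbhs_infty_gtr.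
by rewrite ltr_nat.
Unshelve. all: end_near. Qed.

Lemma inv_sqrt_inv (c : R) : 0 < c -> (Num.sqrt c^-1)^-1 = Num.sqrt c.
Proof. by move=> c0; rewrite sqrtrV ?invrK // ltW. Qed.

Local Open Scope ereal_scope.

Lemma final al be ga de (a b : \bar R) (x y : R^nat) :
  (forall t : R, (0%R < t)%R -> a <= (phi al be ga de t)%:E /\ (phi al be ga de t)%:E <= b) ->
  (forall n, (0 < x n <= 1)%R) -> (forall n, (0 < y n <= 1)%R) ->
  x @ \oo --> (0%R : R) -> y @ \oo --> (0%R : R) ->
  (fun n => (phi al be ga de (x n))%:E) @ \oo --> a ->
  (fun n => (phi al be ga de (y n))%:E) @ \oo --> b ->
  exists f : R -> R,
    {within `[0%R, 1%R], continuous f} /\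
    [set L | rh_seq_secant_derivative f L] = ereal_cc a b.
Proof.
move=> hab hx hy x0 y0 xa yb.
exists (Ff al be ga de); split.
  exact/continuous_subspaceT/Ff_cont.
have sec : forall h : R^nat, (forall n, (0 < h n)%R) ->
    (fun n => ((Ff al be ga de (h n) - Ff al be ga de 0) / h n)%:E) =
    (fun n => (phi al be ga de (h n))%:E).
  move=> h hp; apply: funext => n; congr (_%:E).
  rewrite /Ff mul0r subr0 gtr0_norm ?hp // [X in (X / _)%R]mulrC mulfK //.
  by rewrite gt_eqF ?hp.
apply/seteqP; split => L /=.
  move=> [h [hp [h0 hL]]].
  have hp' : forall n, (0 < h n)%R by move=> n; case/andP: (hp n).
  rewrite sec // in hL.
  exact: (sub_lem _ _ _ _ _ hab hp' hL).
move=> [aL Lb].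
have [h [hp [h0 hL]]] := sup_lem _ _ _ L _ _ (@phi_cont _ _ _ _) hx hy x0 y0 xa yb
  (introT andP (conj aL Lb)).
exists h; split => //; split => //.
by rewrite sec // => n; case/andP: (hp n).
Qed.
End S.

Local Open Scope ring_scope.
Theorem theorem2p7 (R : realType) (a b : \bar R) :
  (a < b)%E ->
  exists f : R -> R,
    {within `[0, 1], continuous f} /\
    [set L | rh_seq_secant_derivative f L] = ereal_cc a b.
Proof.
move=> ab.
pose xs := fun n => (cm R n)^-1.
pose ys := fun n => (cp R n)^-1.
have [hx x0] := (@seq_props R _ (cm_ge R)).
have [hy y0] := (@seq_props R _ (cp_ge R)).
have cm0 : forall n, 0 < cm R n by move=> n; apply: lt_le_trans (cm_ge R n); rewrite ltr0n.
have cp0 : forall n, 0 < cp R n by move=> n; apply: lt_le_trans (cp_ge R n); rewrite ltr0n.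
have sx : forall n, sin (xs n)^-1 = -1 by move=> n; rewrite /xs invrK sin_cm.
have sy : forall n, sin (ys n)^-1 = 1 by move=> n; rewrite /ys invrK sin_cp.
have qx : forall n, (Num.sqrt (xs n))^-1 = Num.sqrt (cm R n) by move=> n; rewrite inv_sqrt_inv.
have qy : forall n, (Num.sqrt (ys n))^-1 = Num.sqrt (cp R n) by move=> n; rewrite inv_sqrt_inv.
have sb := fun t : R => (sin_geN1 t, sin_le1 t).
case: a b ab => [r| |] [s| |] //= ab.
-
  rewrite lte_fin in ab.
  apply: (@final R ((r + s) / 2) ((s - r) / 2) 0 0 _ _ xs ys) => //.
  + move=> t t0; rewrite !lee_fin /phi !mul0r add0r mul0r addr0.
    have [h1 h2] := sb t^-1; split; nra.
  + have -> : (fun n => (phi R ((r + s) / 2) ((s - r) / 2) 0 0 (xs n))%:E) = fun=> r%:E.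
      by apply: funext => n; rewrite /phi sx !mul0r add0r mul0r addr0; congr (_%:E); lra.
    exact: cvg_cst.
  + have -> : (fun n => (phi R ((r + s) / 2) ((s - r) / 2) 0 0 (ys n))%:E) = fun=> s%:E.
      by apply: funext => n; rewrite /phi sy !mul0r add0r mul0r addr0; congr (_%:E); lra.
    exact: cvg_cst.
-
  apply: (@final R r 0 1 1 _ _ xs ys) => //.
  + move=> t t0; rewrite leey lee_fin /phi mul0r addr0 mul1r; split => //.
    rewrite lerDl divr_ge0 ?sqrtr_ge0 //; have [h1 h2] := sb t^-1; lra.
  + have -> : (fun n => (phi R r 0 1 1 (xs n))%:E) = fun=> r%:E.
      by apply: funext => n; rewrite /phi sx mul0r addr0 mul1r subrr mul0r addr0.
    exact: cvg_cst.
  + apply/cvgeryP/cvgryPge => A.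
    near=> n; rewrite /phi sy mul0r addr0 mul1r qy.
    have : (A - r) / 2 <= Num.sqrt (cp R n) by near: n; apply: sqrt_big; exact: cp_ge.
    lra.
-
  apply: (@final R s 0 (-1) (-1) _ _ ys xs) => //.
  + move=> t t0; rewrite leNye lee_fin /phi mul0r addr0 mulN1r; split => //.
    rewrite gerDl mulr_le0_ge0 ?invr_ge0 ?sqrtr_ge0 //; have [h1 h2] := sb t^-1; lra.
  + apply/cvgerNyP/cvgrNyPle => A.
    near=> n; rewrite /phi sy mul0r addr0 mulN1r qy.
    have : (s - A) / 2 <= Num.sqrt (cp R n) by near: n; apply: sqrt_big; exact: cp_ge.
    lra.
  + have -> : (fun n => (phi R s 0 (-1) (-1) (xs n))%:E) = fun=> s%:E.
      by apply: funext => n; rewrite /phi sx mul0r addr0 mulN1r opprK addNr mul0r addr0.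
    exact: cvg_cst.
-
  apply: (@final R 0 0 0 1 _ _ xs ys) => //.
  + by move=> t t0; rewrite leey leNye.
  + apply/cvgerNyP/cvgrNyPle => A.
    near=> n; rewrite /phi sx mul0r !add0r mul1r qx.
    have : - A <= Num.sqrt (cm R n) by near: n; apply: sqrt_big; exact: cm_ge.
    lra.
  + apply/cvgeryP/cvgryPge => A.
    near=> n; rewrite /phi sy mul0r !add0r mul1r qy.
    have : A <= Num.sqrt (cp R n) by near: n; apply: sqrt_big; exact: cp_ge.
    lra.
Unshelve. all: end_near. Qed.
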